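(* Let $\Phi:\mathbb{R}^n\to\mathbb{R}$ be of class $C^2$, bounded from below, with Hessian $\nabla^2\Phi$ Lipschitz continuous on bounded sets, and let $\alpha,\beta>0$. Consider the system \[ \ddot x(t)+\alpha\dot x(t)+\beta\nabla^2\Phi(x(t))\dot x(t)+\nabla\Phi(x(t))=0, \] written in phase space as $\dot x=v$, $\dot v=-\alpha v-\nabla\Phi(x)-\beta\nabla^2\Phi(x)v$. Let $(x(t),v(t))$ be a solution defined on $[0,\infty)$ that is bounded. Then $\int_0^\infty\|\dot x(t)\|^2dt<\infty$, $\int_0^\infty\|\nabla\Phi(x(t))\|^2dt<\infty$, $v(t)=\dot x(t)\to0$ and $\nabla\Phi(x(t))\to0$ as $t\to\infty$, and consequently $\operatorname{dist}\big((x(t),v(t)),S\big)\to0$, where $S:=\{(x,v)\in\mathbb{R}^n\times\mathbb{R}^n: v=0,\ \nabla\Phi(x)=0\}$. *)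

(* Defs.v *)
From HB Require Import structures.
From mathcomp Require Import all_boot all_order all_algebra.
From mathcomp Require Import all_classical all_reals all_analysis.
Set Implicit Arguments. Unset Strict Implicit. Unset Printing Implicit Defensive.
Import Order.TTheory GRing.Theory Num.Theory.
Import numFieldNormedType.Exports.
Local Open Scope classical_set_scope.
Local Open Scope ring_scope.

Definition dotv (R : realType) (n : nat) (u w : 'rV[R]_n) : R :=
  \sum_(i < n) u ord0 i * w ord0 i.
Definition sqnorm (R : realType) (n : nat) (u : 'rV[R]_n) : R := dotv u u.
Definition enorm (R : realType) (n : nat) (u : 'rV[R]_n) : R :=
  Num.sqrt (sqnorm u).

Definition is_gradient (R : realType) (n : nat)
  (Phi : 'rV[R]_n -> R) (G : 'rV[R]_n -> 'rV[R]_n) : Prop :=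
  forall y, differentiable Phi y /\ forall h, 'd Phi y h = dotv h (G y).

(* H is the Hessian of Phi (= Jacobian of its gradient G): G is
   differentiable everywhere with differential h |-> H y h (acting on the
   row vector h as h *m (H y)^T, i.e. the column-vector product (H y) h). *)
Definition is_hessian (R : realType) (n : nat)
  (G : 'rV[R]_n -> 'rV[R]_n) (H : 'rV[R]_n -> 'M[R]_n) : Prop :=
  forall y, differentiable G y /\ forall h, 'd G y h = h *m (H y)^T.

Definition lipschitz_on_bounded (R : realType) (n : nat)
  (H : 'rV[R]_n -> 'M[R]_n) : Prop :=
  forall M : R, exists L : R, forall y z : 'rV[R]_n,
    enorm y <= M -> enorm z <= M -> `|H y - H z| <= L * enorm (y - z).

(* dist((x,v), S) with S = {(y,w) : w = 0, G y = 0}, Euclidean norm on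
   R^n x R^n. *)
Definition distS (R : realType) (n : nat) (G : 'rV[R]_n -> 'rV[R]_n)
  (x v : 'rV[R]_n) : R :=
  inf [set Num.sqrt (sqnorm (x - y) + sqnorm v) | y in [set y | G y = 0]].

(* Main.v *)
Require Import Defs.
From HB Require Import structures.
From mathcomp Require Import all_boot all_order all_algebra.
From mathcomp Require Import all_classical all_reals all_analysis.
From mathcomp Require Import ring lra measurable_realfun.
Import Order.TTheory GRing.Theory Num.Theory.
Import numFieldNormedType.Exports.
Local Open Scope classical_set_scope.
Local Open Scope ring_scope.
Set Implicit Arguments. Unset Strict Implicit. Unset Printing Implicit Defensive.



Lemma dotvC (R : realType) n (u w : 'rV[R]_n) : dotv u w = dotv w u.
Proof. by apply: eq_bigr => i _; rewrite mulrC. Qed.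
Lemma dotvDl (R : realType) n (u u' w : 'rV[R]_n) :
  dotv (u + u') w = dotv u w + dotv u' w.
Proof. by rewrite /dotv -big_split; apply: eq_bigr => i _; rewrite mxE mulrDl. Qed.
Lemma dotvZl (R : realType) n k (u w : 'rV[R]_n) :
  dotv (k *: u) w = k * dotv u w.
Proof. by rewrite /dotv mulr_sumr; apply: eq_bigr => i _; rewrite mxE mulrA. Qed.
Lemma dotvNl (R : realType) n (u w : 'rV[R]_n) : dotv (- u) w = - dotv u w.
Proof. by rewrite -scaleN1r dotvZl mulN1r. Qed.
Lemma dotvBl (R : realType) n (u u' w : 'rV[R]_n) :
  dotv (u - u') w = dotv u w - dotv u' w.
Proof. by rewrite dotvDl dotvNl. Qed.
Lemma dotvDr (R : realType) n (u u' w : 'rV[R]_n) :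
  dotv w (u + u') = dotv w u + dotv w u'.
Proof. by rewrite dotvC dotvDl !(dotvC w). Qed.
Lemma dotvZr (R : realType) n k (u w : 'rV[R]_n) :
  dotv w (k *: u) = k * dotv w u.
Proof. by rewrite dotvC dotvZl dotvC. Qed.
Lemma dotvNr (R : realType) n (u w : 'rV[R]_n) : dotv w (- u) = - dotv w u.
Proof. by rewrite dotvC dotvNl dotvC. Qed.
Lemma dotvBr (R : realType) n (u u' w : 'rV[R]_n) :
  dotv w (u - u') = dotv w u - dotv w u'.
Proof. by rewrite dotvDr dotvNr. Qed.
Lemma sqnorm_ge0 (R : realType) n (u : 'rV[R]_n) : 0 <= sqnorm u.
Proof. by rewrite /sqnorm /dotv; apply: sumr_ge0 => i _; rewrite -expr2 sqr_ge0. Qed.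
Lemma dotv_le (R : realType) n (lam : R) (u w : 'rV[R]_n) :
  2 * lam * dotv u w <= lam ^+ 2 * sqnorm u + sqnorm w.
Proof.
have := sqnorm_ge0 (lam *: u - w).
rewrite /sqnorm !(dotvBl, dotvBr, dotvZl, dotvZr) (dotvC w u).
move=> h; rewrite -subr_ge0; apply: le_trans h _; rewrite le_eqVlt; apply/orP; left.
apply/eqP; rewrite /sqnorm; ring.
Qed.

Lemma is_derive_compd (R : realType) (U W : normedModType R) (f : R -> U)
  (g : U -> W) (t : R) (df : U) :
  is_derive t 1 f df -> differentiable g (f t) ->
  is_derive t 1 (g \o f) ('d g (f t) df).
Proof.
move=> [fd <-] gd.
have fdf : differentiable f t by apply/derivable1_diffP.
have gfd : differentiable (g \o f) t by apply: differentiable_comp.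
apply: DeriveDef; first by apply/derivable1_diffP.
rewrite deriveE // diff_comp //=.
by rewrite deriveE.
Qed.

Lemma is_derive_coord (R : realType) n (f : R -> 'rV[R]_n) (t : R) (df : 'rV[R]_n) i :
  is_derive t 1 f df -> is_derive t 1 (fun s => f s ord0 i) (df ord0 i).
Proof.
move=> hf.
pose g := fun u : 'rV[R]_n => u ord0 i.
have glin : linear g by move=> a u w; rewrite /g !mxE.
pose gL : {linear 'rV[R]_n -> R} := HB.pack g (GRing.isLinear.Build _ _ _ _ _ glin).
have gc : continuous gL by apply: coord_continuous.
have := is_derive_compd hf (linear_differentiable (f t) gc).
by rewrite diff_lin.
Qed.

Lemma is_derive_dotv (R : realType) n (f g : R -> 'rV[R]_n) (t : R) (df dg : 'rV[R]_n) :
  is_derive t 1 f df -> is_derive t 1 g dg ->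
  is_derive t 1 (fun s => dotv (f s) (g s)) (dotv df (g t) + dotv (f t) dg).
Proof.
move=> hf hg.
have -> : (fun s => dotv (f s) (g s)) =
   \sum_(i < n) (fun s => f s ord0 i * g s ord0 i).
  by apply/funext => s; rewrite /dotv fct_sumE.
apply: is_derive_eq.
  apply: is_derive_sum => i.
  exact: is_deriveM (is_derive_coord i hf) (is_derive_coord i hg).
by rewrite /dotv -big_split; apply: eq_bigr => i _ /=; rewrite /GRing.scale /=; ring.
Qed.



Lemma cvg_coord (R : realType) n (T : Type) (F : set_system T) (FF : Filter F)
  (f : T -> 'rV[R]_n) (a : 'rV[R]_n) i : f @ F --> a -> (fun s => f s ord0 i) @ F --> a ord0 i.
Proof.
move=> hf.
have hc : (fun M : 'rV[R]_n => M ord0 i) @ a --> a ord0 i by apply: coord_continuous.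
exact: (cvg_comp _ _ hf hc).
Qed.

Lemma cvg_dotv (R : realType) n (T : Type) (F : set_system T) (FF : Filter F)
  (f g : T -> 'rV[R]_n) (a b : 'rV[R]_n) : f @ F --> a -> g @ F --> b ->
  (fun s => dotv (f s) (g s)) @ F --> dotv a b.
Proof.
move=> hf hg.
have -> : (fun s => dotv (f s) (g s)) =
   \sum_(i < n) (fun s => f s ord0 i * g s ord0 i).
  by apply/funext => s; rewrite /dotv fct_sumE.
rewrite /dotv.
elim/big_ind2 : _ => //.
- exact: cvg_cst.
- by move=> u1 l1 u2 l2 h1 h2; apply: cvgD.
- move=> i _; apply: cvgM; exact: cvg_coord.
Qed.

Lemma DdE (R : realType) n (al be : R) (a b : 'rV[R]_n) :
  let w := a + be *: b in let w' := - (al *: a) - b in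
  - ((1 + al * be) * dotv a b + 2^-1 * (dotv w' w + dotv w w')) =
  al * sqnorm a + be * sqnorm b.
Proof.
move=> w w'; rewrite /w /w' /sqnorm.
rewrite !(dotvDl, dotvDr, dotvBl, dotvBr, dotvNl, dotvNr, dotvZl, dotvZr).
rewrite (dotvC b a); field.
by [].
Qed.



Lemma barbalat (R : realType) (E f dE df : R -> R) (l K eps : R) :
 0 < eps -> 0 <= K ->
 (forall t : R, 0 < t -> is_derive t 1 E (dE t)) ->
 (forall t : R, 0 < t -> is_derive t 1 f (df t)) ->
 (forall t : R, 0 < t -> `|df t| <= K) ->
 (forall t : R, 0 < t -> dE t <= - (eps * f t)) ->
 (forall t : R, 0 < t -> 0 <= f t) ->
 E t @[t --> +oo] --> l ->
 f t @[t --> +oo] --> 0.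
Proof.
move=> e0 K0 dEd dfd dfb dEle f0 El.
apply/cvgrPdist_lt => d d0.
pose h := d / (2 * (K + 1)).
have h0 : 0 < h by rewrite /h divr_gt0 // mulr_gt0 // ltr_wpDl.
have Kh : K * h <= d / 2.
  have -> : K * h = (d / 2) * (K / (K + 1)) by rewrite /h; field; lra.
  apply: ler_piMr; first lra.
  rewrite ler_pdivrMr; lra.
pose eta := eps * (d / 2) * h.
have eta0 : 0 < eta by rewrite /eta; apply: mulr_gt0 => //; apply: mulr_gt0 => //; lra.
have := (cvgrPdist_lt _ _).1 El (eta / 2) ltac:(lra).
case=> M0 [M0r HM0].
exists (Num.max M0 0); split; first by rewrite num_real.
move=> t; rewrite gt_max => /andP[tM0 t0].
rewrite sub0r normrN ger0_norm ?f0 //.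
rewrite ltNge; apply/negP => dft.
have fge s : t <= s <= t + h -> d / 2 <= f s.
  move=> /andP[ts sth].
  have [c cI fE] : exists2 c, c \in `[t, s] & f s - f t = df c * (s - t).
    apply: MVT_segment => //.
      move=> x; rewrite in_itv /= => /andP[tx _]; apply: dfd; lra.
    apply: derivable_within_continuous => x; rewrite in_itv /= => /andP[tx _].
    by apply: (@ex_derive _ _ _ _ _ _ (df x)); apply: dfd; lra.
  have dfc : - K <= df c.
    have := dfb c; move: cI; rewrite in_itv /= => /andP[tc _].
    by move=> /(_ ltac:(lra)); rewrite ler_norml => /andP[].
  have : - K * (s - t) <= df c * (s - t) by rewrite ler_wpM2r // subr_ge0.
  have : K * (s - t) <= K * h by rewrite ler_wpM2l //; lra.
  lra.
have [c cI EE] : exists2 c, c \in `]t, t + h[ & E (t + h) - E t = dE c * (t + h - t).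
  apply: MVT; first lra.
    move=> x; rewrite in_itv /= => /andP[tx _]; apply: dEd; lra.
  apply: derivable_within_continuous => x; rewrite in_itv /= => /andP[tx _].
  by apply: (@ex_derive _ _ _ _ _ _ (dE x)); apply: dEd; lra.
move: cI; rewrite in_itv /= => /andP[tc ct].
have fc := fge c ltac:(apply/andP; split; lra).
have dEc : dE c <= - (eps * (d / 2)).
  apply: le_trans (dEle c ltac:(lra)) _.
  by rewrite lerN2 ler_wpM2l // ltW.
have : dE c * h <= - eta by rewrite /eta -mulNr ler_wpM2r // ltW.
have := HM0 t tM0; have := HM0 (t + h) ltac:(lra).
rewrite !ltr_norml => /andP[a1 a2] /andP[a3 a4].
move: EE; rewrite addrAC subrr add0r => EE.
lra.
Qed.



Lemma entry_le_norm (R : realType) m n (A : 'M[R]_(m,n)) i j : `|A i j| <= `|A|.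
Proof.
rewrite [leRHS]/Num.norm /= mx_normrE; apply/bigmax_geP; right => /=.
by exists (i, j).
Qed.

Lemma norm_le_entries (R : realType) m n (A : 'M[R]_(m,n)) (b : R) :
  0 <= b -> (forall i j, `|A i j| <= b) -> `|A| <= b.
Proof.
move=> b0 hb; rewrite [leLHS]/Num.norm /= mx_normrE; apply: bigmax_le => //=.
Qed.

Lemma sqnorm_le (R : realType) n (u : 'rV[R]_n) : sqnorm u <= n%:R * `|u| ^+ 2.
Proof.
rewrite /sqnorm /dotv (_ : _ * _ = \sum_(i < n) `|u| ^+ 2); last first.
  by rewrite sumr_const card_ord mulr_natl.
apply: ler_sum => i _; rewrite -expr2 -real_normK ?num_real //.
rewrite lerXn2r ?nnegrE //; exact: entry_le_norm.
Qed.

Lemma entry_sq_le (R : realType) n (u : 'rV[R]_n) i : u ord0 i ^+ 2 <= sqnorm u.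
Proof.
rewrite /sqnorm /dotv (bigD1 i) //= -expr2 lerDl.
by apply: sumr_ge0 => j _; rewrite -expr2 sqr_ge0.
Qed.

Lemma enorm_ge0 (R : realType) n (u : 'rV[R]_n) : 0 <= enorm u.
Proof. exact: sqrtr_ge0. Qed.

Lemma enorm_sq (R : realType) n (u : 'rV[R]_n) : enorm u ^+ 2 = sqnorm u.
Proof. by rewrite /enorm sqr_sqrtr // sqnorm_ge0. Qed.

Lemma norm_le_enorm (R : realType) n (u : 'rV[R]_n) : `|u| <= enorm u.
Proof.
apply: norm_le_entries; first exact: enorm_ge0.
move=> i j; rewrite (ord1 i).
rewrite -(ler_pXn2r (n := 2)) ?nnegrE ?enorm_ge0 //.
by rewrite real_normK ?num_real // enorm_sq entry_sq_le.
Qed.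

Lemma dotv_norm_le (R : realType) n (u w : 'rV[R]_n) :
  `|dotv u w| <= n%:R * (`|u| * `|w|).
Proof.
rewrite /dotv (_ : _ * _ = \sum_(i < n) (`|u| * `|w|)); last first.
  by rewrite sumr_const card_ord mulr_natl.
apply: le_trans (ler_norm_sum _ _ _) _.
apply: ler_sum => i _; rewrite normrM.
by apply: ler_pM => //; apply: entry_le_norm.
Qed.

Lemma mulmx_norm_le (R : realType) n (u : 'rV[R]_n) (A : 'M[R]_n) :
  `|u *m A^T| <= n%:R * (`|u| * `|A|).
Proof.
apply: norm_le_entries; first by rewrite !mulr_ge0.
move=> i j; rewrite mxE (_ : _ * _ = \sum_(k < n) (`|u| * `|A|)); last first.
  by rewrite sumr_const card_ord mulr_natl.
apply: le_trans (ler_norm_sum _ _ _) _.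
apply: ler_sum => k _; rewrite normrM mxE.
by apply: ler_pM => //; apply: entry_le_norm.
Qed.



Lemma integral_bound (R : realType) (f Dd P : R -> R) (l k : R) :
 0 < k -> (forall t, 0 <= t -> 0 <= f t) -> (forall t, 0 <= t -> k * f t <= Dd t) ->
 {within `[0, +oo[, continuous f} -> {within `[0, +oo[, continuous Dd} ->
 P x @[x --> +oo] --> l -> (forall x : R, 0 < x -> derivable P x 1) ->
 P x @[x --> 0^'+] --> P 0 -> {in `]0, +oo[, derive1 P =1 Dd} ->
 (\int[lebesgue_measure]_(t in `[0%R, +oo[) (f t)%:E < +oo)%E.
Proof.
move=> k0 f0 fD cf cD Pl dP P0 dPE.
have D0 t : 0 <= t -> 0 <= Dd t.
  move=> t0; apply: le_trans (fD t t0); exact: mulr_ge0 (ltW k0) (f0 t t0).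
have I := ge0_continuous_FTC2y D0 cD Pl dP P0 dPE.
have mD : measurable (`[0, +oo[ : set R) by [].
have mf : measurable_fun (`[0, +oo[ : set R) f.
  by apply: subspace_continuous_measurable_fun.
have mD' : measurable_fun (`[0, +oo[ : set R) Dd.
  by apply: subspace_continuous_measurable_fun.
have mg : measurable_fun (`[0, +oo[ : set R) (fun t => k^-1 * Dd t).
  exact: measurable_funM.
apply: (@le_lt_trans _ _ (\int[lebesgue_measure]_(t in `[0%R, +oo[) (k^-1 * Dd t)%:E)%E).
  apply: ge0_le_integral => //; [ | exact/measurable_EFinP | exact/measurable_EFinP | ].
    by move=> t; rewrite /= in_itv /= andbT => t0; rewrite lee_fin f0.
  move=> t; rewrite /= in_itv /= andbT => t0; rewrite lee_fin.
  by rewrite ler_pdivlMl // fD.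
under eq_integral do rewrite EFinM.
rewrite ge0_integralZl //.
- by rewrite I -EFinB -EFinM ltry.
- exact/measurable_EFinP.
- by move=> t; rewrite /= in_itv /= andbT => t0; rewrite lee_fin D0.
- by rewrite lee_fin invr_ge0 ltW.
Qed.



Lemma distS_cvg (R : realType) n (G : 'rV[R]_n -> 'rV[R]_n) (x v : R -> 'rV[R]_n)
  (M : R) :
  continuous G -> (forall t : R, 0 <= t -> enorm (x t) <= M) ->
  v t @[t --> +oo] --> (0 : 'rV[R]_n) -> G (x t) @[t --> +oo] --> (0 : 'rV[R]_n) ->
  distS G (x t) (v t) @[t --> +oo] --> 0.
Proof.
move=> Gc xM v0 G0.
pose D := fun t => distS G (x t) (v t).
have D0 t : 0 <= D t.
  rewrite /D /distS.
  set S := [set _ | _ in _].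
  case: (pselect (exists z, S z)) => [[z Sz] | nS].
    apply: lb_le_inf; first by exists z.
    by move=> r [y _ <-]; exact: sqrtr_ge0.
  have -> : S = set0.
    by apply/seteqP; split => r // Sr; case: nS; exists r.
  by rewrite inf0.
have Dle t y : G y = 0 -> D t <= Num.sqrt (sqnorm (x t - y) + sqnorm (v t)).
  move=> Gy; rewrite /D /distS; apply: ge_inf.
    by exists 0 => r [z _ <-]; exact: sqrtr_ge0.
  by exists y.
apply/cvgrPdist_lt => d d0.
suff : \forall t \near +oo, D t < d.
  apply: filterS => t Dt; rewrite sub0r normrN ger0_norm; [exact: Dt | exact: D0].
apply: contrapT => hn.
have hfreq : forall T : R, exists t, T < t /\ d <= D t.
  move=> T; apply: contrapT => hT; apply: hn.
  exists T; split; first by rewrite num_real.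
  move=> t Tt; rewrite ltNge; apply/negP => dD; apply: hT; by exists t.
pose B := fun T : R => [set t | T < t /\ d <= D t].
pose Fr := filter_from [set: R] B.
have FrF : ProperFilter Fr.
  apply: filter_from_proper.
    apply: filter_from_filter; first by exists 0.
    move=> i j _ _; exists (Num.max i j); first by [].
    by move=> t [/=]; rewrite gt_max => /andP[it jt] dt; split.
  by move=> i _; have [t [it dt]] := hfreq i; exists t.
pose K := [set y : 'rV[R]_n | forall i, `[-M, M]%classic (y ord0 i)].
have sc : compact (`[-M, M]%classic : set R) by apply: segment_compact.
have cK : compact K := rV_compact (fun i : 'I_n => sc).
have xK : (x @ Fr) K.
  exists 0 => //; move=> t [t0 _] i /=.
  have := le_trans (entry_le_norm (x t) ord0 i) (le_trans (norm_le_enorm _) (xM t (ltW t0))).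
  by rewrite ler_norml in_itv /=.
have [p [Kp clp]] := cK (x @ Fr) (fmap_proper_filter x FrF) xK.
have Gp0 : G p = 0.
  apply: contrapT => /eqP Gp.
  have e0 : 0 < `|G p| / 2 by rewrite divr_gt0 // normr_gt0.
  have [T0 [_ hT0]] := (cvgrPdist_lt _ _).1 G0 _ e0.
  have FA : (x @ Fr) [set y | `|G y| < `|G p| / 2].
    exists T0 => // t [T0t _] /=.
    by have := hT0 t T0t; rewrite sub0r normrN.
  have NB : nbhs p [set y | `|G p - G y| < `|G p| / 2].
    exact: ((cvgrPdist_lt _ _).1 (Gc p) _ e0).
  have [y [Ay By]] := clp _ _ FA NB.
  move: Ay By => /= Ay By.
  have := ler_normD (G p - G y) (G y); rewrite subrK.
  lra.
pose r := d / (2 * (n%:R + 1)).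
have r0 : 0 < r by rewrite divr_gt0 // mulr_gt0 // ltr_wpDl.
have [T1 [_ hT1]] := (cvgrPdist_lt _ _).1 v0 _ r0.
have FA : (x @ Fr) [set y | exists t, T1 < t /\ d <= D t /\ y = x t].
  by exists T1 => // t [T1t dt] /=; exists t.
have NB : nbhs p (ball p r) by apply: nbhsx_ballx.
have [y [[t [T1t [dt ->]]] Bt]] := clp _ _ FA NB.
have vt := hT1 t T1t; rewrite sub0r normrN in vt.
move: Bt; rewrite -ball_normE /= => Bt.
have := Dle t p Gp0.
have s1 := sqnorm_le (x t - p).
have s2 := sqnorm_le (v t).
have N0 : 0 <= (n%:R : R) by [].
have h1 : `|x t - p| ^+ 2 <= r ^+ 2.
  by rewrite lerXn2r ?nnegrE ?(ltW r0) // distrC ltW.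
have h2 : `|v t| ^+ 2 <= r ^+ 2 by rewrite lerXn2r ?nnegrE ?(ltW r0) // ltW.
have key : sqnorm (x t - p) + sqnorm (v t) < d ^+ 2.
  have hr : r * (2 * (n%:R + 1)) = d by rewrite /r divfK // mulf_neq0 // lt0r_neq0 // ltr_wpDl.
  have : n%:R * `|x t - p| ^+ 2 <= n%:R * r ^+ 2 by apply: ler_wpM2l.
  have : n%:R * `|v t| ^+ 2 <= n%:R * r ^+ 2 by apply: ler_wpM2l.
  rewrite -hr; nra.
have : Num.sqrt (sqnorm (x t - p) + sqnorm (v t)) < d.
  by rewrite -(ger0_norm (ltW d0)) -sqrtr_sqr ltr_sqrt // exprn_gt0.
lra.
Qed.



Lemma cvg_sqnorm0 (R : realType) n (T : Type) (F : set_system T) (FF : Filter F)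
  (u : T -> 'rV[R]_n) : (fun s => sqnorm (u s)) @ F --> 0 -> u @ F --> (0 : 'rV[R]_n).
Proof.
move=> h; apply/cvgrPdist_lt => e e0.
have := (cvgrPdist_lt _ _).1 h (e ^+ 2) (exprn_gt0 2 e0).
move=> hh; near=> s.
have : `|0 - sqnorm (u s)| < e ^+ 2 by near: s; exact: hh.
rewrite !sub0r !normrN ger0_norm ?sqnorm_ge0 // => hs.
apply: le_lt_trans (norm_le_enorm _) _.
by rewrite -(ger0_norm (ltW e0)) -sqrtr_sqr /enorm ltr_sqrt // exprn_gt0.
Unshelve. all: by end_near. Qed.

Lemma is_derive_cont (R : realType) (V : normedModType R) (f : R -> V) (t : R) df :
  is_derive t 1 f df -> {for t, continuous f}.
Proof.
move=> [hd _]; apply: differentiable_continuous; exact/derivable1_diffP.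
Qed.


Unset Implicit Arguments.

Theorem mainTheorem10 (R : realType) (n : nat)
  (Phi : 'rV[R]_n -> R) (G : 'rV[R]_n -> 'rV[R]_n) (H : 'rV[R]_n -> 'M[R]_n)
  (alpha beta : R) (x v : R -> 'rV[R]_n) :
  is_gradient Phi G ->
  is_hessian G H ->
  continuous H ->
  (exists m : R, forall y, m <= Phi y) ->
  lipschitz_on_bounded H ->
  0 < alpha -> 0 < beta ->
  (* (x, v) solves the phase-space system on [0, +oo) *)
  (forall t : R, 0 < t ->
     is_derive t 1 x (v t) /\
     is_derive t 1 v (- (alpha *: v t) - G (x t) - beta *: (v t *m (H (x t))^T))) ->
  x @ at_right 0 --> x 0 ->
  v @ at_right 0 --> v 0 ->
  (* the solution is bounded *)
  (exists M : R, forall t : R, 0 <= t -> enorm (x t) <= M /\ enorm (v t) <= M) ->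
  ((\int[lebesgue_measure]_(t in `[0%R, +oo[) (sqnorm (v t))%:E < +oo)%E /\
   (\int[lebesgue_measure]_(t in `[0%R, +oo[) (sqnorm (G (x t)))%:E < +oo)%E /\
   v t @[t --> +oo] --> (0:'rV[R]_n) /\
   G (x t) @[t --> +oo] --> (0:'rV[R]_n) /\
   distS G (x t) (v t) @[t --> +oo] --> 0).
Proof.
move=> hgrad hhess Hc [m hm] hlip al0 be0 hode hx0 hv0 [M hM].
pose c := 1 + alpha * beta.
have c0 : 0 < c by rewrite /c; nra.
have Gc : continuous G := fun y => differentiable_continuous (hhess y).1.
have Phic : continuous Phi := fun y => differentiable_continuous (hgrad y).1.
pose g := fun s => G (x s).
pose v' := fun s => - (alpha *: v s) - G (x s) - beta *: (v s *m (H (x s))^T).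
have dx (t : R) : 0 < t -> is_derive t 1 x (v t) := fun ht => (hode t ht).1.
have dv (t : R) : 0 < t -> is_derive t 1 v (v' t) := fun ht => (hode t ht).2.
have dG (t : R) : 0 < t -> is_derive t 1 g (v t *m (H (x t))^T).
  move=> ht; have := is_derive_compd (dx t ht) (hhess (x t)).1.
  by rewrite (hhess (x t)).2.
have dPhi (t : R) : 0 < t -> is_derive t 1 (fun s => Phi (x s)) (dotv (v t) (G (x t))).
  move=> ht; have := is_derive_compd (dx t ht) (hgrad (x t)).1.
  by rewrite (hgrad (x t)).2.
pose w := fun s => v s + beta *: G (x s).
pose w' := fun s => - (alpha *: v s) - G (x s).
have dw (t : R) : 0 < t -> is_derive t 1 w (w' t).
  move=> ht.
  have -> : w = v + beta \*: g by [].
  have h := is_deriveD (dv t ht) (is_deriveZ beta (dG t ht)).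
  have -> : w' t = v' t + beta *: (v t *m (H (x t))^T) by rewrite /v' /w' subrK.
  exact: h.
pose E := fun s => c * Phi (x s) + 2^-1 * sqnorm (w s).
pose Dd := fun s => alpha * sqnorm (v s) + beta * sqnorm (G (x s)).
have dE (t : R) : 0 < t -> is_derive t 1 E (- Dd t).
  move=> ht.
  have -> : E = c \*: (fun s => Phi (x s)) + 2^-1 \*: (fun s => dotv (w s) (w s)) by [].
  apply: is_derive_eq.
    apply: is_deriveD; apply: is_deriveZ; [exact: dPhi | exact: is_derive_dotv (dw t ht) (dw t ht)].
  by rewrite /Dd -(DdE alpha beta (v t) (G (x t))) opprK.
have Dd0 (s : R) : 0 <= Dd s.
  by rewrite /Dd addr_ge0 // mulr_ge0 ?sqnorm_ge0 // ltW.
have vcont (t : R) : 0 < t -> v @ t --> v t := fun ht => is_derive_cont (dv t ht).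
have gcont (t : R) : 0 < t -> g @ t --> g t := fun ht => is_derive_cont (dG t ht).
have xcont (t : R) : 0 < t -> x @ t --> x t := fun ht => is_derive_cont (dx t ht).
have g0 : g @ 0^'+ --> g 0 := cvg_comp _ _ hx0 (Gc (x 0)).
have phi0 : (fun s => Phi (x s)) @ 0^'+ --> Phi (x 0) := cvg_comp _ _ hx0 (Phic (x 0)).
have phicont (t : R) : 0 < t -> (fun s => Phi (x s)) @ t --> Phi (x t).
  by move=> ht; exact: cvg_comp _ _ (xcont t ht) (Phic (x t)).
have Ddlim (F : set_system R) (FF : Filter F) (t0 : R) :
    v @ F --> v t0 -> g @ F --> g t0 -> Dd @ F --> Dd t0.
  move=> h1 h2; apply: cvgD; apply: cvgM; try exact: cvg_cst.
    exact: (cvg_dotv FF h1 h1).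
  exact: (cvg_dotv FF h2 h2).
have f1lim (F : set_system R) (FF : Filter F) (t0 : R) :
    v @ F --> v t0 -> (fun s => sqnorm (v s)) @ F --> sqnorm (v t0).
  by move=> h1; exact: (cvg_dotv FF h1 h1).
have f2lim (F : set_system R) (FF : Filter F) (t0 : R) :
    g @ F --> g t0 -> (fun s => sqnorm (g s)) @ F --> sqnorm (g t0).
  by move=> h1; exact: (cvg_dotv FF h1 h1).
have Elim (F : set_system R) (FF : Filter F) (t0 : R) :
    v @ F --> v t0 -> g @ F --> g t0 -> (fun s => Phi (x s)) @ F --> Phi (x t0) ->
    E @ F --> E t0.
  move=> h1 h2 h3.
  have hw : w @ F --> w t0 by apply: cvgD => //; apply: cvgZ => //; exact: cvg_cst.
  apply: cvgD; apply: cvgM; [exact: cvg_cst | exact: h3 | exact: cvg_cst | exact: (cvg_dotv FF hw hw)].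
have within_of (f : R -> R) : (forall t : R, 0 < t -> f @ t --> f t) ->
    f @ 0^'+ --> f 0 -> {within `[0, +oo[, continuous f}.
  move=> h1 h2; apply/continuous_within_itvcyP; split => // t.
  rewrite in_itv /= andbT => ht; exact: h1.
have Ecw : {within `[0, +oo[, continuous E}.
  apply: within_of.
    by move=> t ht; apply: Elim; [exact: vcont | exact: gcont | exact: phicont].
  by apply: Elim.
have Enonincr (s t : R) : 0 <= s -> s <= t -> E t <= E s.
  move=> s0 st.
  have hd : forall y, y \in `]0, t + 1[ -> derivable E y 1.
    by move=> y; rewrite in_itv /= => /andP[y0 _]; case: (dE y y0).
  have hle : forall y, y \in `]0, t + 1[ -> derive1 E y <= 0.
    move=> y; rewrite in_itv /= => /andP[y0 _].
    by rewrite derive1E; case: (dE y y0) => _ ->; rewrite oppr_le0.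
  have hcw : {within `[0, t + 1], continuous E}.
    apply: continuous_subspaceW Ecw.
    by move=> y; rewrite /= !in_itv /= => /andP[y0 _]; rewrite y0.
  apply: (ler0_derive1_le_cc hd hle hcw) => //; rewrite in_itv /=; apply/andP; split; lra.
have M0 : 0 <= M by have [h _] := hM 0 (lexx 0); exact: le_trans (enorm_ge0 _) h.
have Elb (t : R) : c * m <= E t.
  rewrite /E; have := ler_wpM2l (ltW c0) (hm (x t)).
  have := sqnorm_ge0 (w t); lra.
pose W := 2 * (E 0 - c * m).
have wb (t : R) : 0 <= t -> sqnorm (w t) <= W.
  move=> t0; have := Enonincr 0 t (lexx 0) t0.
  have := ler_wpM2l (ltW c0) (hm (x t)); rewrite /W /E; lra.
have nv (t : R) : 0 <= t -> `|v t| <= M.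
  by move=> t0; exact: le_trans (norm_le_enorm _) (hM t t0).2.
pose BG := (Num.sqrt W + M) / beta.
have gb (t : R) : 0 <= t -> `|G (x t)| <= BG.
  move=> t0.
  have hw : `|w t| <= Num.sqrt W.
    by apply: le_trans (norm_le_enorm _) _; rewrite /enorm ler_wsqrtr // wb.
  have e1 : beta *: G (x t) = w t - v t by rewrite /w addrC addKr.
  have : `|beta *: G (x t)| <= Num.sqrt W + M.
    by rewrite e1; apply: le_trans (ler_normB _ _) _; apply: lerD => //; exact: nv.
  by rewrite normrZ gtr0_norm // /BG ler_pdivlMr // mulrC.
have [L hL] := hlip M.
pose BH := `|H 0| + `|L| * M.
have enorm0 : enorm (0 : 'rV[R]_n) = 0.
  rewrite /enorm /sqnorm /dotv big1 ?sqrtr0 // => i _; by rewrite mxE mul0r.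
have hb (t : R) : 0 <= t -> `|H (x t)| <= BH.
  move=> t0; have := hL (x t) 0 (hM t t0).1 ltac:(by rewrite enorm0).
  rewrite subr0 => h.
  have h2 : L * enorm (x t) <= `|L| * M.
    apply: le_trans (ler_norm _) _; rewrite normrM (ger0_norm (enorm_ge0 _)).
    by apply: ler_wpM2l => //; exact: (hM t t0).1.
  have := ler_normD (H (x t) - H 0) (H 0); rewrite subrK /BH => h3.
  lra.
have BG0 : 0 <= BG by rewrite /BG divr_ge0 ?addr_ge0 ?sqrtr_ge0 // ltW.
have BH0 : 0 <= BH by rewrite /BH addr_ge0 // mulr_ge0.
have N0 : 0 <= (n%:R : R) by [].
have nvH (t : R) : 0 <= t -> `|v t *m (H (x t))^T| <= n%:R * (M * BH).
  move=> t0; apply: le_trans (mulmx_norm_le _ _) _.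
  by apply: ler_wpM2l => //; apply: ler_pM => //; [exact: nv | exact: hb].
pose Vp := alpha * M + BG + beta * (n%:R * (M * BH)).
have nv' (t : R) : 0 <= t -> `|v' t| <= Vp.
  move=> t0; rewrite /v'.
  apply: le_trans (ler_normB _ _) _.
  have h1 := ler_normB (- (alpha *: v t)) (G (x t)).
  rewrite normrN normrZ gtr0_norm // in h1.
  rewrite normrZ gtr0_norm //.
  have := nv t t0; have := gb t t0; have := nvH t t0.
  have := ler_wpM2l (ltW al0) (nv t t0).
  have := ler_wpM2l (ltW be0) (nvH t t0).
  rewrite /Vp; lra.
pose P := fun t : R => - E (Num.max t 0).
have Pnd : nondecreasing_fun P.
  move=> s t st; rewrite /P lerN2; apply: Enonincr; first by rewrite le_max lexx orbT.
  by rewrite ge_max !le_max st lexx !orbT.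
have Pub : has_ubound (range P).
  by exists (- (c * m)) => _ [t _ <-]; rewrite /P lerN2 Elb.
have Pl := nondecreasing_cvgr Pnd Pub.
set lP := sup (range P) in Pl.
have El : E t @[t --> +oo] --> - lP.
  apply: (cvg_trans _ (cvgN Pl)); apply: near_eq_cvg.
  exists 0; split; first exact: num_real.
  by move=> t t0; rewrite -[LHS]/(- P t) /P opprK max_l // ltW.
have dPd (t : R) : 0 < t -> is_derive t 1 P (Dd t).
  move=> ht; rewrite -[Dd t]opprK.
  apply: (near_eq_is_derive _ (is_deriveN (dE t ht))).
  near=> s.
  have s0 : 0 < s by near: s; exact: lt_nbhsr.
  by rewrite -[LHS]/(- E s) /P max_l // ltW.
have P0 : P x @[x --> 0^'+] --> P 0.
  have -> : P 0 = - E 0 by rewrite /P max_l.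
  apply: (cvg_trans _ (cvgN (Elim _ _ 0 hv0 g0 phi0))); apply: near_eq_cvg.
  near=> s.
  have s0 : 0 < s by near: s; exact: nbhs_right_gt.
  by rewrite -[LHS]/(- E s) /P max_l // ltW.
have dP (t : R) : 0 < t -> derivable P t 1 by move=> ht; case: (dPd t ht).
have dPE : {in `]0, +oo[, derive1 P =1 Dd}.
  move=> t; rewrite in_itv /= andbT => ht.
  by rewrite derive1E; case: (dPd t ht) => _ ->.
have Ddw : {within `[0, +oo[, continuous Dd}.
  apply: within_of; last exact: Ddlim.
  by move=> t ht; apply: Ddlim; [exact: vcont | exact: gcont].
have I1 : (\int[lebesgue_measure]_(t in `[0%R, +oo[) (sqnorm (v t))%:E < +oo)%E.
  apply: (@integral_bound R (fun t => sqnorm (v t)) Dd P lP alpha) => //.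
  - by move=> t _; exact: sqnorm_ge0.
  - move=> t _; rewrite /Dd lerDl; apply: mulr_ge0; [exact: ltW | exact: sqnorm_ge0].
  - apply: within_of; last exact: f1lim.
    by move=> t ht; apply: f1lim; exact: vcont.
have I2 : (\int[lebesgue_measure]_(t in `[0%R, +oo[) (sqnorm (G (x t)))%:E < +oo)%E.
  apply: (@integral_bound R (fun t => sqnorm (G (x t))) Dd P lP beta) => //.
  - by move=> t _; exact: sqnorm_ge0.
  - move=> t _; rewrite /Dd lerDr; apply: mulr_ge0; [exact: ltW | exact: sqnorm_ge0].
  - apply: within_of; last exact: (f2lim _ _ 0 g0).
    by move=> t ht; apply: f2lim; exact: gcont.
have Vp0 : 0 <= Vp.
  rewrite /Vp; apply: addr_ge0; first (apply: addr_ge0 => //; apply: mulr_ge0 => //; exact: ltW).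
  by apply: mulr_ge0; [exact: ltW | apply: mulr_ge0 => //; exact: mulr_ge0].
have dEle1 (t : R) : 0 < t -> - Dd t <= - (alpha * sqnorm (v t)).
  move=> _; rewrite lerN2 /Dd lerDl; apply: mulr_ge0; [exact: ltW | exact: sqnorm_ge0].
have dEle2 (t : R) : 0 < t -> - Dd t <= - (beta * sqnorm (G (x t))).
  move=> _; rewrite lerN2 /Dd lerDr; apply: mulr_ge0; [exact: ltW | exact: sqnorm_ge0].
pose K1 := n%:R * (Vp * M) + n%:R * (M * Vp).
have df1 (t : R) : 0 < t -> is_derive t 1 (fun s => sqnorm (v s))
    (dotv (v' t) (v t) + dotv (v t) (v' t)).
  by move=> ht; exact: is_derive_dotv (dv t ht) (dv t ht).
have dfb1 (t : R) : 0 < t -> `|dotv (v' t) (v t) + dotv (v t) (v' t)| <= K1.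
  move=> ht; have t0 := ltW ht.
  apply: le_trans (ler_normD _ _) _; apply: lerD; apply: le_trans (dotv_norm_le _ _) _;
    apply: ler_wpM2l => //; apply: ler_pM => //; by [exact: nv' | exact: nv].
have K10 : 0 <= K1 by rewrite /K1 addr_ge0 // mulr_ge0 // mulr_ge0.
have v0 : v t @[t --> +oo] --> (0 : 'rV[R]_n).
  apply: cvg_sqnorm0.
  exact: (@barbalat R E (fun s => sqnorm (v s)) (fun s => - Dd s)
    (fun s => dotv (v' s) (v s) + dotv (v s) (v' s)) (- lP) K1 alpha al0 K10 dE df1 dfb1
    dEle1 (fun t _ => sqnorm_ge0 _) El).
pose gv := fun s => v s *m (H (x s))^T.
pose K2 := n%:R * ((n%:R * (M * BH)) * BG) + n%:R * (BG * (n%:R * (M * BH))).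
have df2 (t : R) : 0 < t -> is_derive t 1 (fun s => sqnorm (G (x s)))
    (dotv (gv t) (G (x t)) + dotv (G (x t)) (gv t)).
  by move=> ht; exact: is_derive_dotv (dG t ht) (dG t ht).
have dfb2 (t : R) : 0 < t -> `|dotv (gv t) (G (x t)) + dotv (G (x t)) (gv t)| <= K2.
  move=> ht; have t0 := ltW ht.
  apply: le_trans (ler_normD _ _) _; apply: lerD; apply: le_trans (dotv_norm_le _ _) _;
    apply: ler_wpM2l => //; apply: ler_pM => //; by [exact: nvH | exact: gb].
have K20 : 0 <= K2.
  by rewrite /K2 addr_ge0 // mulr_ge0 // mulr_ge0 // mulr_ge0 // mulr_ge0.
have gl0 : G (x t) @[t --> +oo] --> (0 : 'rV[R]_n).
  apply: cvg_sqnorm0.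
  exact: (@barbalat R E (fun s => sqnorm (G (x s))) (fun s => - Dd s)
    (fun s => dotv (gv s) (G (x s)) + dotv (G (x s)) (gv s)) (- lP) K2 beta be0 K20 dE df2 dfb2
    dEle2 (fun t _ => sqnorm_ge0 _) El).
split; first exact: I1.
split; first exact: I2.
split; first exact: v0.
split; first exact: gl0.
exact: (distS_cvg Gc (fun t t0 => (hM t t0).1) v0 gl0).
Unshelve. all: by end_near.
Qed.
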